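(* Let $(X,G)$ be a minimal topological dynamical system, $K\ge 2$, and $(x_1,\dots,x_K)\in RP_K(X,G)$. Then for any $\epsilon>0$ and any nonempty open set $U\subset X$, there exist $h\in G$ and nonempty open sets $V_k\subset B^X_\epsilon(x_k)$, $k=1,\dots,K$, such that $hV_k\subset U$ for all $k=1,\dots,K$.
   Context: $G$ is an infinite countable discrete group; a tds $(X,G)$ is a compact metric space $(X,d)$ with a $G$-action by homeomorphisms; minimal means no proper nonempty closed invariant subset. $B^X_\epsilon(x)$ is the open $\epsilon$-ball. $RP_K(X,G)$ is the set of $(x_1,\dots,x_K)\in X^K$ such that for every $\epsilon>0$ there exist $x_k'\in X$ and $g\in G$ with $d(x_k,x_k')\le\epsilon$ for $1\le k\le K$ and $d(gx'_{k_1},gx'_{k_2})\le\epsilon$ for $1\le k_1\le k_2\le K$. *)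

(* Defs.v *)
From HB Require Import structures.
From mathcomp Require Import all_boot all_order all_algebra.
From mathcomp Require Import all_classical all_reals all_analysis.
Set Implicit Arguments. Unset Strict Implicit. Unset Printing Implicit Defensive.
Import Order.TTheory GRing.Theory Num.Theory.
Local Open Scope classical_set_scope.
Local Open Scope ring_scope.

Definition is_group (G : Type) (mul : G -> G -> G) (one : G) (inv : G -> G) : Prop :=
  (forall a b c, mul a (mul b c) = mul (mul a b) c) /\
  (forall a, mul one a = a) /\ (forall a, mul a one = a) /\
  (forall a, mul (inv a) a = one) /\ (forall a, mul a (inv a) = one).

Definition is_action_homeo (R : realType) (G : Type) (X : metricType R)
  (mul : G -> G -> G) (one : G) (act : G -> X -> X) : Prop :=
  (forall x, act one x = x) /\
  (forall g h x, act (mul g h) x = act g (act h x)) /\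
  (forall g, continuous (act g)) /\
  (forall g, bijective (act g)) /\
  (forall g (f : X -> X), cancel (act g) f -> cancel f (act g) -> continuous f).

Definition minimal_action (R : realType) (G : Type) (X : metricType R)
  (act : G -> X -> X) : Prop :=
  forall A : set X, closed A -> (forall g, act g @` A `<=` A) ->
    A = set0 \/ A = [set: X].

Definition RP (R : realType) (G : Type) (X : metricType R)
  (act : G -> X -> X) (K : nat) : set ('I_K -> X) :=
  [set xs | forall eps : R, 0 < eps ->
     exists (xs' : 'I_K -> X) (g : G),
       (forall k, mdist (xs k) (xs' k) <= eps) /\
       (forall k1 k2 : 'I_K, (k1 <= k2)%N ->
          mdist (act g (xs' k1)) (act g (xs' k2)) <= eps)].

(* Main.v *)
Require Import Defs.
From HB Require Import structures.
From mathcomp Require Import all_boot all_order all_algebra.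
From mathcomp Require Import all_classical all_reals all_analysis.
Import Order.TTheory GRing.Theory Num.Theory.
Local Open Scope classical_set_scope.
Local Open Scope ring_scope.

Theorem lemma2p4 (R : realType) (G : countType)
  (mul : G -> G -> G) (one : G) (inv : G -> G)
  (X : metricType R) (act : G -> X -> X)
  (hG : is_group mul one inv) (hGinf : infinite_set [set: G])
  (hX : compact [set: X])
  (hact : is_action_homeo mul one act)
  (hmin : minimal_action act)
  (K : nat) (hK : (2 <= K)%N) (xs : 'I_K -> X) (hxs : RP act xs) :
  forall (eps : R), 0 < eps ->
  forall U : set X, open U -> U !=set0 ->
  exists (h : G) (V : 'I_K -> set X),
    forall k : 'I_K,
      [/\ open (V k), V k !=set0, V k `<=` ball (xs k) eps
        & act h @` V k `<=` U].
Proof.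
move=> eps eps0 U oU U0.
case: hact => act1 [actM [actC [actB actInv]]].
have : forall n : nat, exists p : ('I_K -> X) * G,
  (forall k, mdist (xs k) (p.1 k) <= n.+1%:R^-1) /\
  (forall k1 k2 : 'I_K, (k1 <= k2)%N ->
     mdist (act p.2 (p.1 k1)) (act p.2 (p.1 k2)) <= n.+1%:R^-1).
  move=> n; have [x' [g [h1 h2]]] := hxs n.+1%:R^-1 (ltac:(by rewrite invr_gt0 ltr0Sn)).
  by exists (x', g).
case/choice => f hf.
have K0 : (0 < K)%N by apply: leq_trans hK.
pose k0 : 'I_K := Ordinal K0.
pose z n := act (f n).2 ((f n).1 k0).
have [y [_ cly]] := hX (z @ \oo) _ filterT.
have [g0 Ug0y] : exists g0, U (act g0 y).
  pose A := [set x | forall g, ~ U (act g x)].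
  have cA : closed A.
    have -> : A = \bigcap_(g in setT) ~` (act g @^-1` U).
      by apply/seteqP; split => x /= H g; [move=> _; exact: H | exact: H].
    apply: closed_bigI => g _; apply: open_closedC; apply: open_comp; [move=> x _; exact: actC | exact: oU].
  have iA : forall g, act g @` A `<=` A.
    by move=> g _ [x Ax <-] g'; rewrite -actM; exact: Ax.
  case: (hmin A cA iA) => [A0|AT].
    apply: contrapT => nex.
    have : A y by move=> g Ug; apply: nex; exists g.
    by rewrite A0.
  case: U0 => u Uu.
  have : A u by rewrite AT.
  by move/(_ one); rewrite act1.
have oW : open (act g0 @^-1` U).
  by apply: open_comp => // x _; exact: actC.
have : nbhs y (act g0 @^-1` U) by apply: open_nbhs_nbhs; split.
move/nbhs_ballP => [r /= r0 hr].
pose m := Num.min (eps / 2) (r / 2).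
have m0 : 0 < m by rewrite lt_min !divr_gt0.
pose A := [set w | exists n, n.+1%:R^-1 < m /\ w = z n].
have FA : (z @ \oo) A.
  apply: filterS (near_infty_natSinv_lt (PosNum m0)) => n hn.
  by exists n.
have r20 : 0 < r / 2 by rewrite divr_gt0.
have [w [[n [hn ->]] hb]] := cly A (ball y (r / 2)) FA (nbhsx_ballx _ _ r20).
rewrite lt_min in hn; case/andP: hn => hne hnr.
case: (hf n) => h1 h2.
exists (mul g0 (f n).2), (fun k => (ball ((f n).1 k) (eps / 2))° `&`
   (act (mul g0 (f n).2) @^-1` U)).
move=> k; split.
- apply: openI; first exact: open_interior.
  by apply: open_comp => // x _; exact: actC.
- exists ((f n).1 k); split; first by apply: nbhsx_ballx; rewrite divr_gt0.
  rewrite /= actM; apply: hr.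
  have b2 : ball (z n) (r / 2) (act (f n).2 ((f n).1 k)).
    rewrite ballEmdist /=; apply: le_lt_trans hnr.
    exact: (h2 k0 k (leq0n _)).
  by have := ball_triangle hb b2; rewrite -splitr.
- move=> v [/interior_subset bv _].
  have b1 : ball (xs k) (eps / 2) ((f n).1 k).
    rewrite ballEmdist /=; exact: le_lt_trans (h1 k) hne.
  by have := ball_triangle b1 bv; rewrite -splitr.
- by move=> _ [v [_ Uv] <-].
Qed.
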